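(* Let $f,g\in\mathbb{R}[x,y]$ with $f(0,0)=g(0,0)=0$, both regular in $x$, such that $\{f=0\}\subset\{g=0\}$ near the origin, and let $\mathscr{L}_g(f)$ be the Łojasiewicz exponent of $f$ with respect to $g$. (1) If $0<\mathscr{L}_g(f)<1$, then $\displaystyle\lim_{(x,y)\to(0,0)}\frac{g(x,y)}{f(x,y)}=0$. (2) If $\mathscr{L}_g(f)>1$, then the limit $\displaystyle\lim_{(x,y)\to(0,0)}\frac{g(x,y)}{f(x,y)}$ does not exist.
   Context: A polynomial $f=f_m+f_{m+1}+\cdots$ ($f_k$ homogeneous of degree $k$, $f_m\not\equiv0$, $m\ge1$) is regular in $x$ if $f_m(1,0)\neq0$. The Łojasiewicz exponent $\mathscr{L}_g(f)$ is the infimum of all $\alpha>0$ for which there exist $C,r>0$ with $|f(x,y)|\ge C|g(x,y)|^\alpha$ for $|(x,y)|\le r$. The limit is taken over points where $f\neq0$. *)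

(* Defs.v *)
From HB Require Import structures.
From mathcomp Require Import all_boot all_order all_algebra.
From mathcomp Require Import all_classical all_reals all_analysis.
Set Implicit Arguments. Unset Strict Implicit. Unset Printing Implicit Defensive.
Import Order.TTheory GRing.Theory Num.Theory.
Import numFieldNormedType.Exports.
Local Open Scope ring_scope.
Local Open Scope classical_set_scope.

(* A real polynomial in two variables x, y is represented as
   p : {poly {poly R}}, p = \sum_j p_j(x) y^j.                         *)

Definition bcoef (R : nzRingType) (p : {poly {poly R}}) (i j : nat) : R :=
  (p`_j)`_i.

Definition peval2 (R : comNzRingType) (p : {poly {poly R}}) (z : R * R) : R :=
  (p.[z.2%:P]).[z.1].

Definition hom_part (R : nzRingType) (p : {poly {poly R}}) (k : nat) (x y : R) : R :=
  \sum_(i < k.+1) bcoef p i (k - i) * x ^+ i * y ^+ (k - i).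

Definition regular_in_x (R : nzRingType) (p : {poly {poly R}}) : Prop :=
  exists m : nat, (1 <= m)%N /\
    (forall i j : nat, (i + j < m)%N -> bcoef p i j = 0) /\
    (exists x y : R, hom_part p m x y != 0) /\
    hom_part p m 1 0 != 0.

Definition norm2 (R : realType) (z : R * R) : R := Num.sqrt (z.1 ^+ 2 + z.2 ^+ 2).

Definition loj_exponent (R : realType) (f g : {poly {poly R}}) : \bar R :=
  ereal_inf [set (alpha%:E)%E | alpha in
    [set alpha : R | 0 < alpha /\
      exists C r : R, 0 < C /\ 0 < r /\
        forall z : R * R, norm2 z <= r ->
          C * (`|peval2 g z| `^ alpha) <= `|peval2 f z| ]].

(* Main.v *)
Require Import Defs.
From HB Require Import structures.
From mathcomp Require Import all_boot all_order all_algebra.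
From mathcomp Require Import all_classical all_reals all_analysis.
From mathcomp Require Import lra.
Import Order.TTheory GRing.Theory Num.Theory.
Import numFieldNormedType.Exports.
Local Open Scope ring_scope.
Local Open Scope classical_set_scope.

Lemma peval2_cont (R : realType) (p : {poly {poly R}}) : continuous (peval2 p).
Proof.
elim/poly_ind: p => [|q c IH].
  move=> z; rewrite /peval2 /=.
  have -> : (fun z : R * R => (0 : {poly {poly R}}).[z.2%:P].[z.1]) = (fun=> 0).
    by apply/funext => w; rewrite !horner0.
  exact: cvg_cst.
have E : peval2 (q * 'X + c%:P) = (fun z => peval2 q z * z.2 + c.[z.1]).
  apply/funext => z; rewrite /peval2 hornerMXaddC hornerD hornerM hornerC //.
move=> z; rewrite E.
apply: cvgD; first apply: cvgM; first exact: IH.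
- exact: cvg_snd.
- apply: (continuous_comp (f := fst)); [exact: cvg_fst| exact: continuous_horner].
Qed.

Lemma near00_ball (R : realType) (P : set (R * R)) :
  (\forall z \near ((0:R), (0:R)), P z) ->
  exists r : R, 0 < r /\ forall z, norm2 z <= r -> P z.
Proof.
move=> /nbhs_ballP [e e0 He].
exists (e / 2); split; first by apply: divr_gt0.
move=> z hz; apply: He; rewrite /ball /= /prod_ball /ball /=.
have h1 : `|z.1| <= norm2 z.
  by rewrite /norm2 -sqrtr_sqr ler_wsqrtr // lerDl sqr_ge0.
have h2 : `|z.2| <= norm2 z.
  by rewrite /norm2 -sqrtr_sqr ler_wsqrtr // lerDr sqr_ge0.
rewrite !sub0r !normrN; split.
- by apply: (le_lt_trans h1); apply: (le_lt_trans hz); rewrite ltr_pdivrMr // ltr_pMr // ltr1n.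
- by apply: (le_lt_trans h2); apply: (le_lt_trans hz); rewrite ltr_pdivrMr // ltr_pMr // ltr1n.
Qed.

Lemma near00_norm2 (R : realType) (r : R) : 0 < r ->
  \forall z \near ((0:R), (0:R)), norm2 z <= r.
Proof.
move=> r0; apply/nbhs_ballP; exists (r / 2); first by apply: divr_gt0.
move=> z; rewrite /ball /= /prod_ball /ball /= !sub0r !normrN => -[h1 h2].
rewrite /norm2 -(ger0_norm (ltW r0)) -sqrtr_sqr ler_wsqrtr //.
have a1 : z.1 ^+ 2 <= (r/2)^+2.
  rewrite -(real_normK (num_real z.1)); have := normr_ge0 z.1; nra.
have a2 : z.2 ^+ 2 <= (r/2)^+2.
  rewrite -(real_normK (num_real z.2)); have := normr_ge0 z.2; nra.
nra.
Qed.

Theorem proposition5p1 (R : realType) (f g : {poly {poly R}}) :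
  peval2 f (0, 0) = 0 -> peval2 g (0, 0) = 0 ->
  regular_in_x f -> regular_in_x g ->
  (\forall z \near ((0 : R), (0 : R)), peval2 f z = 0 -> peval2 g z = 0) ->
  (((0 < loj_exponent f g)%E /\ (loj_exponent f g < 1)%E) ->
     (fun z => peval2 g z / peval2 f z)
       @ within [set z | peval2 f z != 0] (nbhs ((0 : R), (0 : R))) --> (0 : R))
  /\
  ((1 < loj_exponent f g)%E ->
     ~ exists l : R,
       (fun z => peval2 g z / peval2 f z)
         @ within [set z | peval2 f z != 0] (nbhs ((0 : R), (0 : R))) --> l).
Proof.
move=> f0 g0 _ _ Hfg; split.
- move=> [_ H1].
  have [y [a [a0 [C [r [C0 [r0 HC]]]]]] <-] := ereal_inf_lt H1.
  rewrite lte_fin => a1.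
  apply/cvgrPdist_lt => eps eps0; rewrite near_withinE.
  have b0 : 0 < 1 - a by rewrite subr_gt0.
  set d := (eps * C) `^ (1 - a)^-1.
  have d0 : 0 < d by apply: powR_gt0; rewrite mulr_gt0.
  have hd : d `^ (1 - a) = eps * C.
    rewrite /d -powRrM mulVf ?gt_eqF // powRr1 // ltW // mulr_gt0 //.
  have Hg := @peval2_cont R g (0, 0).
  move/cvgrPdist_lt: Hg => /(_ d d0) Hg.
  near=> z => /= fz.
  have : norm2 z <= r by near: z; exact: near00_norm2.
  move=> /HC hz.
  have : `|0 - peval2 g z| < d by rewrite -g0; near: z; exact: Hg.
  rewrite sub0r normrN => gd.
  rewrite sub0r normrN normrM normfV.
  have F0 : 0 < `|peval2 f z| by rewrite normr_gt0.
  rewrite ltr_pdivrMr //.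
  have [gz0|gzn0] := eqVneq (peval2 g z) 0.
    by rewrite gz0 normr0 mulr_gt0.
  have G0 : 0 < `|peval2 g z| by rewrite normr_gt0.
  set G := `|peval2 g z| in gd hz G0 *.
  have Ga0 : 0 < G `^ a by apply: powR_gt0.
  have -> : G = G `^ (1 - a) * G `^ a.
    rewrite -powRD; last by apply/implyP => _; rewrite gt_eqF.
    by rewrite subrK powRr1 // (ltW G0).
  apply: (lt_le_trans (y := eps * C * G `^ a)).
    rewrite ltr_pM2r // -hd; apply: gt0_ltr_powR => //; rewrite ?nnegrE ltW //.
  by rewrite -mulrA ler_pM2l.
- move=> H1 [l Hl].
  move/cvgrPdist_lt: Hl => /(_ 1 ltr01); rewrite near_withinE => Hl.
  have [r [r0 Hr]] := @near00_ball R _ (filterI Hl Hfg).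
  have : (loj_exponent f g <= 1%:E)%E.
    apply: ereal_inf_lbound; exists 1 => //; split => //.
    exists (`|l| + 1)^-1, r; split; first by rewrite invr_gt0 ltr_wpDl.
    split => // z /Hr [hl hfg].
    rewrite powRr1 //.
    have [fz0|fzn0] := eqVneq (peval2 f z) 0.
      by rewrite (hfg fz0) normr0 mulr0.
    have F0 : 0 < `|peval2 f z| by rewrite normr_gt0.
    rewrite mulrC ler_pdivrMr ?ltr_wpDl //.
    have h := hl fzn0.
    have : `|peval2 g z / peval2 f z| <= `|l| + 1.
      rewrite -[X in `|X|](subKr l) (le_trans (ler_normB _ _)) // lerD2l ltW //.
    by rewrite normrM normfV ler_pdivrMr // mulrC.
  by rewrite leNgt H1.
Unshelve. all: by end_near.
Qed.
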